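(* Let $n\ge2$, and let $\Gamma,\Gamma'\in\mathcal{K}_n$ with associated arrays $A,A'$ and associated directed graphs $G,G'$. Then $\Gamma\simeq\Gamma'$ (as groups) if and only if $A=A'$, which in turn holds if and only if $G$ and $G'$ are isomorphic as directed graphs.
   Context: Let $e_1,\dots,e_n$ be the canonical basis of $\mathbb{R}^n$. For $1\le i\le n-1$ let $C_i$ be the diagonal matrix with $-1$ in position $i$ and $1$ elsewhere, and $c_i=\tfrac12e_{i+1}+\sum_{j=1}^{i-1}c_{ji}e_j$ with $c_{ji}\in\{0,\tfrac12\}$. $\mathcal{K}_n$ is the set of subgroups of $I(\mathbb{R}^n)$ generated by $\{C_iL_{c_i}:1\le i\le n-1\}\cup\{L_{e_j}:1\le j\le n\}$, over all choices of the $c_{ji}$ (here $BL_b$ is $x\mapsto B(x+b)$). The array $A$ of such a group is the $n\times n$ array whose $i$-th column, for $1\le i\le n-1$, is the coordinate vector of $c_i$, and whose $n$-th column is the vector with entries in $\{0,\tfrac12\}$ congruent to $c_1+\dots+c_{n-1}$ modulo $\mathbb{Z}^n$. The associated directed graph has vertex set $\{v_1,\dots,v_n\}$ and an arrow from $v_i$ to $v_j$ (loops allowed) if and only if the $(i,j)$ entry of $A$ equals $\tfrac12$. *)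

(* Defs.v *)
From HB Require Import structures.
From mathcomp Require Import all_boot all_order all_algebra all_fingroup.
From mathcomp Require Import reals.
Set Implicit Arguments. Unset Strict Implicit. Unset Printing Implicit Defensive.
Import Order.TTheory GRing.Theory Num.Theory.
Local Open Scope ring_scope.

Section KnDefs.
Variables (R : realType) (n : nat).

Notation V := 'cV[R]_n.

Inductive gen_grp (S : (V -> V) -> Prop) : (V -> V) -> Prop :=
| gen_id : gen_grp S id
| gen_base f : S f -> gen_grp S f
| gen_comp f g : gen_grp S f -> gen_grp S g -> gen_grp S (f \o g)
| gen_inv f g : gen_grp S f -> cancel f g -> cancel g f -> gen_grp S g.

Definition grp_iso (G H : (V -> V) -> Prop) : Prop :=
  exists phi : (V -> V) -> (V -> V),
    [/\ (forall f, G f -> H (phi f)),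
        (forall f g, G f -> G g -> phi f = phi g -> f = g),
        (forall h, H h -> exists f, G f /\ phi f = h) &
        (forall f g, G f -> G g -> phi (f \o g) = phi f \o phi g)].

Definition evec (j : 'I_n) : V := delta_mx j 0.

(* C_i : diagonal, -1 at position i, 1 elsewhere (0-based indices) *)
Definition Cmat (i : 'I_n) : 'M[R]_n :=
  \matrix_(k, l) (if k == l then (if k == i then -1 else 1) else 0).

(* the choice data: c j i = true iff c_{ji} = 1/2 (only used for j < i) *)
(* c_i = 1/2 e_{i+1} + sum_{j<i} c_{ji} e_j   (0-based: i <= n-2)       *)
Definition cvec (c : 'I_n -> 'I_n -> bool) (i : 'I_n) : V :=
  \col_k (if (k : nat) == i.+1 then 2^-1
          else if ((k : nat) < i)%N && c k i then 2^-1 else 0).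

(* generators C_i L_{c_i} (x |-> C_i (x + c_i)), 0<=i<=n-2, and L_{e_j} *)
Definition Kgens (c : 'I_n -> 'I_n -> bool) (f : V -> V) : Prop :=
  (exists i : 'I_n, (i.+1 < n)%N /\ f = (fun x => Cmat i *m (x + cvec c i)))
  \/ (exists j : 'I_n, f = (fun x => x + evec j)).

Definition Kgroup (c : 'I_n -> 'I_n -> bool) : (V -> V) -> Prop :=
  gen_grp (Kgens c).

(* the associated array: column i (i <= n-2) is c_i; last column is the
   vector with entries in {0,1/2} congruent to c_1+...+c_{n-1} mod Z^n *)
Definition Karray (c : 'I_n -> 'I_n -> bool) : 'M[R]_n :=
  \matrix_(k, i)
    (if (i.+1 < n)%N then cvec c i k 0
     else if (\sum_(j : 'I_n | (j.+1 < n)%N) cvec c j k 0) \is a Num.int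
          then 0 else 2^-1).

Definition Kgraph (A : 'M[R]_n) : rel 'I_n := fun i j => A i j == 2^-1.

Definition digraph_iso (E E' : rel 'I_n) : Prop :=
  exists s : {perm 'I_n}, forall i j, E i j = E' (s i) (s j).

End KnDefs.

(* Main.v *)
Require Import Defs.
From HB Require Import structures.
From mathcomp Require Import all_boot all_order all_algebra all_fingroup.
From mathcomp Require Import reals boolp.
From mathcomp Require Import ring lra zify.
Set Implicit Arguments. Unset Strict Implicit. Unset Printing Implicit Defensive.
Import Order.TTheory GRing.Theory Num.Theory.
Local Open Scope ring_scope.

Section Aff.
Variables (R : realType) (n : nat).
Notation V := 'cV[R]_n.

Definition sgn (b : bool) (x : R) := if b then - x else x.
Definition aff (s : 'I_n -> bool) (b : V) : V -> V :=
  fun x => \col_k (sgn (s k) (x k 0) + b k 0).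
Definition hp (x : R) (p : bool) := exists z : int, x = z%:~R + (if p then 2^-1 else 0).
Definition acoef (c : 'I_n -> 'I_n -> bool) (k i : 'I_n) : bool :=
  ((k : nat) == i.+1) || (((k : nat) < i)%N && c k i).
Definition par c (s : 'I_n -> bool) k : bool := \big[addb/false]_(i | s i) acoef c k i.
Definition inv c (s : 'I_n -> bool) (b : V) :=
  (forall k, s k -> (k.+1 < n)%N) /\ forall k, hp (b k 0) (par c s k).

Lemma vecP (x y : V) : (forall k, x k 0 = y k 0) -> x = y.
Proof. by move=> H; apply/matrixP => k j; rewrite (ord1 j). Qed.

Lemma fvecP (f g : V -> V) : (forall x k, f x k 0 = g x k 0) -> f = g.
Proof. by move=> H; apply: funext => x; apply: vecP. Qed.

Lemma affE s b x k : aff s b x k 0 = sgn (s k) (x k 0) + b k 0.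
Proof. by rewrite /aff mxE. Qed.

Lemma sgnK b x : sgn b (sgn b x) = x.
Proof. by case: b => //=; rewrite opprK. Qed.

Lemma sgnD b x y : sgn b (x + y) = sgn b x + sgn b y.
Proof. by case: b => //=; rewrite opprD. Qed.

Lemma sgn_xor b b' x : sgn b (sgn b' x) = sgn (b (+) b') x.
Proof. by case: b; case: b' => //=; rewrite opprK. Qed.

Lemma aff_comp s b s' b' :
  aff s b \o aff s' b' = aff (fun k => s k (+) s' k) (\col_k (sgn (s k) (b' k 0) + b k 0)).
Proof.
apply: fvecP => x k; rewrite /= !affE ?mxE sgnD sgn_xor; ring.
Qed.

Lemma hp_opp x p : hp x p -> hp (- x) p.
Proof.
case=> z ->; case: p; [exists (- z - 1) | exists (- z)]; rewrite /=; by field.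
Qed.

Lemma hp_sgn b x p : hp x p -> hp (sgn b x) p.
Proof. by case: b => //=; apply: hp_opp. Qed.

Lemma hp_add x y p q : hp x p -> hp y q -> hp (x + y) (p (+) q).
Proof.
case=> z -> [z' ->].
case: p; case: q => /=; [exists (z + z' + 1)|exists (z + z')|exists (z + z')|exists (z + z')]; rewrite ?rmorphD /=; by field.
Qed.

Lemma par_xor c s s' k : par c (fun i => s i (+) s' i) k = par c s k (+) par c s' k.
Proof.
rewrite /par [LHS]big_mkcond [X in _ = X (+) _]big_mkcond [X in _ = _ (+) X]big_mkcond.
rewrite -big_split /=; apply: eq_bigr => i _.
by case: (s i); case: (s' i); case: acoef.
Qed.

Lemma par0 c k : par c (fun _ => false) k = false.
Proof. by rewrite /par big_pred0. Qed.

Lemma par1 c i k : par c (fun j => j == i) k = acoef c k i.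
Proof. by rewrite /par big_pred1_eq. Qed.


Lemma Cmat_mul i (y : V) k : (@Cmat R n i *m y) k 0 = sgn (k == i) (y k 0).
Proof.
rewrite mxE (bigD1 k) //= big1 => [|j /negbTE jk]; last by rewrite mxE eq_sym jk mul0r.
by rewrite mxE eqxx addr0; case: (k == i) => /=; rewrite ?mulN1r ?mul1r.
Qed.

Lemma Kgroup_aff c f : @Kgroup R n c f -> exists s b, f = aff s b /\ inv c s b.
Proof.
elim => {f}.
- exists (fun _ => false), 0; split.
    by apply: fvecP => x k; rewrite affE mxE addr0.
  split=> // k; rewrite par0 mxE; by exists 0; rewrite addr0.
- move=> f [[i [hi ->]] | [j ->]].
  + exists (fun j => j == i), (\col_k (sgn (k == i) (@cvec R n c i k 0))); split.
      by apply: fvecP => x k /=; rewrite Cmat_mul affE !mxE sgnD.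
    split=> [k /eqP -> //| k]; rewrite par1 mxE; apply: hp_sgn.
    rewrite /cvec /acoef mxE; case: ((k : nat) == i.+1) => /=.
      by exists 0; rewrite add0r.
    case: (_ && _); [by exists 0; rewrite add0r | by exists 0; rewrite addr0].
  + exists (fun _ => false), (@evec R n j); split.
      by apply: fvecP => x k; rewrite affE !mxE.
    split=> // k; rewrite par0 /evec mxE; exists (((k == j) && (0 == 0 :> 'I_1)))%:R.
    by case: (_ && _); rewrite /= addr0.
- move=> f g _ [s [b [-> [Hs Hb]]]] _ [s' [b' [-> [Hs' Hb']]]].
  rewrite aff_comp; eexists; eexists; split; first reflexivity.
  split=> [k|k]; first by move: (Hs k) (Hs' k); case: (s k); case: (s' k) => //= H1 H2 _; first [exact: H1 | exact: H2].
  rewrite mxE par_xor addbC; apply: hp_add; last exact: Hb.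
  by apply: hp_sgn.
- move=> f g _ [s [b [-> [Hs Hb]]]] fg gf.
  exists s, (\col_k (- sgn (s k) (b k 0))); split; last first.
    by split=> // k; rewrite mxE; apply/hp_opp/hp_sgn.
  apply: funext => y.
  have E : aff s b (aff s (\col_k (- sgn (s k) (b k 0))) y) = y.
    apply: vecP => k; rewrite !affE mxE sgnD sgnK.
    by case: (s k) => /=; ring.
  by rewrite -{1}E fg.
Qed.

Definition aff0 (v : V) := aff (fun _ => false) v.

Lemma aff0E v x k : aff0 v x k 0 = x k 0 + v k 0.
Proof. by rewrite affE. Qed.

Lemma aff00 : aff0 0 = id.
Proof. by apply: fvecP => x k; rewrite aff0E mxE addr0. Qed.

Lemma aff0D (v v' : V) : aff0 (v + v') = aff0 v \o aff0 v'.
Proof. by apply: fvecP => x k; rewrite /= !aff0E mxE; ring. Qed.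

Lemma aff_sq s b : aff s b \o aff s b = aff0 (\col_k (sgn (s k) (b k 0) + b k 0)).
Proof. by apply: fvecP => x k; rewrite /= !affE ?mxE sgnD sgnK /=; ring. Qed.

Lemma aff_inj s b s' b' : aff s b = aff s' b' -> s = s' /\ b = b'.
Proof.
move=> E.
have Eb : b = b'.
  by apply: vecP => k; have := congr1 (fun F : V -> V => F 0 k 0) E; rewrite /= !affE mxE;
     case: (s k); case: (s' k); rewrite /= ?oppr0 !add0r.
split=> //; apply: funext => k.
have := congr1 (fun F : V -> V => F (const_mx 1) k 0) E; rewrite /= !affE mxE Eb => /addIr.
case: (s k); case: (s' k) => //= /eqP; rewrite -subr_eq0 ?opprK => /eqP H; clear E Eb; exfalso; lra.
Qed.

Definition istr (G : (V -> V) -> Prop) (f : V -> V) :=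
  forall h, G h -> f \o (h \o h) = (h \o h) \o f.

Lemma istr_trans c b : istr (@Kgroup R n c) (aff0 b).
Proof.
move=> h /Kgroup_aff [s' [b' [-> _]]]; rewrite aff_sq.
by apply: fvecP => x k; rewrite /= !aff0E !mxE; ring.
Qed.

Lemma u_in c k : @Kgroup R n c (aff0 (@evec R n k)).
Proof.
apply: gen_base; right; exists k; apply: funext => x; apply: vecP => j.
by rewrite aff0E [RHS]mxE.
Qed.

Lemma notistr c s b k : s k = true -> ~ istr (@Kgroup R n c) (aff s b).
Proof.
move=> sk H; have := congr1 (fun F : V -> V => F 0 k 0) (H _ (u_in c k)).
rewrite /= !affE sk /= !mxE !eqxx /=; clear H; lra.
Qed.

Lemma rel1 s b v :
  (aff0 v \o aff s b \o aff0 v = aff s b) <-> (forall j, ~~ s j -> v j 0 = 0).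
Proof.
split.
  move=> E j sj; have := congr1 (fun F : V -> V => F 0 j 0) E.
  rewrite /= !affE !mxE (negbTE sj) /=; clear E; lra.
move=> H; apply: fvecP => x k; rewrite /= !affE.
case sk: (s k) => /=; first by ring.
by rewrite H ?sk //; ring.
Qed.

Lemma rel2 s b v :
  (aff s b \o aff0 v = aff0 v \o aff s b) <-> (forall j, s j -> v j 0 = 0).
Proof.
split.
  move=> E j sj; have := congr1 (fun F : V -> V => F 0 j 0) E.
  rewrite /= !affE !mxE sj /=; clear E; lra.
move=> H; apply: fvecP => x k; rewrite /= !affE.
case sk: (s k) => /=; last by ring.
by rewrite H ?sk //; ring.
Qed.

Lemma gen_aff c (i : 'I_n) : (i.+1 < n)%N ->
  (fun x => @Cmat R n i *m (x + @cvec R n c i)) =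
  aff (fun j => j == i) (\col_k (sgn (k == i) (@cvec R n c i k 0))).
Proof. by move=> _; apply: fvecP => x k /=; rewrite Cmat_mul affE !mxE sgnD. Qed.

Lemma g_in c (i : 'I_n) : (i.+1 < n)%N -> @Kgroup R n c (fun x => @Cmat R n i *m (x + @cvec R n c i)).
Proof. by move=> hi; apply: gen_base; left; exists i. Qed.


Lemma istr_aff0 c f : @Kgroup R n c f -> istr (@Kgroup R n c) f ->
  exists b, f = aff0 b /\ forall k, exists z : int, b k 0 = z%:~R.
Proof.
move=> Gf; have [s [b [-> [_ Hb]]]] := Kgroup_aff Gf => H.
have s0 : s = (fun _ => false).
  apply: funext => k; case sk: (s k) => //; exfalso; exact: (notistr sk H).
exists b; split; first by rewrite s0.
move=> k; have [z ->] := Hb k; exists z; rewrite s0 par0 addr0 //.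
Qed.

Lemma sum_one (z : 'I_n -> R) (w : 'I_n -> V) i j :
  (forall k, k != i -> w k j 0 = 0) -> (\sum_k z k *: w k) j 0 = z i * w i j 0.
Proof.
move=> H; rewrite summxE (bigD1 i) //= big1 ?addr0; first by rewrite mxE.
by move=> k ki; rewrite mxE H // mulr0.
Qed.

Lemma sum_evecE (a : 'I_n -> R) j : (\sum_k a k *: @evec R n k) j 0 = a j.
Proof.
rewrite (@sum_one _ _ j); first by rewrite /evec mxE !eqxx mulr1.
by move=> k kj; rewrite /evec mxE eq_sym (negbTE kj).
Qed.

End Aff.

Section S. Variable R : realType.
Lemma intr1 : ((1 : int)%:~R : R) = 1. Proof. by []. Qed.
Lemma int_pm1 (z y : int) : (z%:~R : R) * y%:~R = 1 -> (y%:~R : R) = 1 \/ (y%:~R : R) = -1.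
Proof.
rewrite -intrM -intr1 => /intr_inj H.
have := intUnitRing.unitzPl H => Hu.
have : y = 1 \/ y = -1 by lia.
by case=> ->; [left|right]; rewrite ?intrN intr1.
Qed.

Lemma odd_half (y : int) (x : int) : (x = 1 \/ x = -1) -> (x%:~R : R) = 2 * y%:~R -> False.
Proof.
move=> Hx E.
have : x = 2 * y by apply: (@intr_inj R); rewrite E intrM.
lia.
Qed.

Lemma parity (a p : bool) (e : R) (y : int) : (e = 1 \/ e = -1) ->
  (a%:R * e = 2 * (y%:~R + (if p then 2^-1 else 0))) -> a = p.
Proof.
move=> He; case: a; case: p => //= E.
- exfalso; apply: (@odd_half y (if e == 1 then 1 else -1)); first by case: eqP; [left|right].
  case: He E => -> E; rewrite ?eqxx ?intr1; first by lra.
  have -> : (-1 == 1 :> R) = false by apply/eqP; lra.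
  rewrite intrN intr1; lra.
- exfalso; apply: (@odd_half (- y) 1); first by left.
  rewrite intrN intr1; move: E; rewrite mul0r; lra.
Qed.
End S.

Section Rigid.
Variable n : nat.

Lemma acoef_diag (c : 'I_n -> 'I_n -> bool) k : acoef c k k = false.
Proof. by rewrite /acoef ltnn andFb orbF eqn_leq ltnn andbF. Qed.

Lemma rigid (c c' : 'I_n -> 'I_n -> bool) (s : 'I_n -> 'I_n) (l : 'I_n) :
  (l : nat) = n.-1 -> injective s -> s l = l ->
  (forall k i : 'I_n, (i.+1 < n)%N -> acoef c k i = acoef c' (s k) (s i)) ->
  forall i, s i = i.
Proof.
move=> hl sinj sl key.
suff H : forall m (i : 'I_n), (n - m <= i)%N -> s i = i.
  by move=> i; apply: (H n); rewrite subnn.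
elim=> [|m IH] i hi; first by move: (ltn_ord i) hi; lia.
case: (leqP (n - m) i) => [|lt]; first exact: IH.
case: (ltnP i.+1 n) => [hi1|hi1].
  have IH1 := IH (Ordinal hi1) ltac:(rewrite /=; lia).
  have := key (Ordinal hi1) i hi1; rewrite IH1 /acoef /= eqxx /=.
  move/esym/orP => [/eqP [] H|/andP [lt2 _]]; first by apply: val_inj.
  have := IH (s i) ltac:(lia) => /sinj //.
have -> : i = l by apply: val_inj; rewrite /= hl -subn1; move: (ltn_ord i) hi1; lia.
exact: sl.
Qed.
End Rigid.

Section Phi.
Variables (R : realType) (n : nat) (c c' : 'I_n -> 'I_n -> bool).
Notation V := 'cV[R]_n.
Variable phi : (V -> V) -> (V -> V).
Let G := @Kgroup R n c.
Let G' := @Kgroup R n c'.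
Hypothesis Hin : forall f, G f -> G' (phi f).
Hypothesis Hinj : forall f g, G f -> G g -> phi f = phi g -> f = g.
Hypothesis Hsur : forall h, G' h -> exists f, G f /\ phi f = h.
Hypothesis Hhom : forall f g, G f -> G g -> phi (f \o g) = phi f \o phi g.

Lemma phi_id : phi id = id.
Proof.
have E : phi id = phi id \o phi id := Hhom (gen_id _) (gen_id _).
have [s [b [Eb _]]] := Kgroup_aff (Hin (gen_id _)).
move: E; rewrite Eb aff_sq => /aff_inj [-> Eb2].
have -> : b = 0.
  apply: vecP => k; have := congr1 (fun v : V => v k 0) Eb2; rewrite !mxE /=.
  by rewrite /sgn => H; apply: (addrI (b k 0)); rewrite addr0 -H.
exact: aff00.
Qed.

Lemma phi_istr f : G f -> istr G f -> istr G' (phi f).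
Proof.
move=> Gf Hf h' G'h'; have [h [Gh <-]] := Hsur G'h'.
have Ghh : G (h \o h) by apply: gen_comp.
by rewrite -(Hhom Gh Gh) -(Hhom Gf Ghh) -(Hhom Ghh Gf) Hf.
Qed.

Lemma phi_istr_rev f : G f -> istr G' (phi f) -> istr G f.
Proof.
move=> Gf H h Gh; have Ghh : G (h \o h) by apply: gen_comp.
apply: Hinj; try by apply: gen_comp.
rewrite (Hhom Gf Ghh) (Hhom Ghh Gf) (Hhom Gh Gh); exact: H (Hin Gh).
Qed.


Definition wv k : V := phi (aff0 (@evec R n k)) 0.

Lemma phi_u k : phi (aff0 (@evec R n k)) = aff0 (wv k).
Proof.
have Gu := u_in R c k.
have [b [Eb _]] := istr_aff0 (Hin Gu) (phi_istr Gu (@istr_trans R n c _)).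
rewrite /wv Eb; congr aff0; apply: vecP => j; by rewrite aff0E mxE add0r.
Qed.

Definition Q (v w : V) := G (aff0 v) /\ phi (aff0 v) = aff0 w.

Lemma Q0 : Q 0 0.
Proof. by rewrite /Q aff00 phi_id; split=> //; apply: gen_id. Qed.

Lemma Qadd v w v' w' : Q v w -> Q v' w' -> Q (v + v') (w + w').
Proof.
move=> [G1 E1] [G2 E2]; rewrite /Q !aff0D; split; first exact: gen_comp.
by rewrite Hhom // E1 E2.
Qed.

Lemma Qopp v w : Q v w -> Q (- v) (- w).
Proof.
move=> [G1 E1].
have can1 : cancel (aff0 v) (aff0 (- v)).
  by move=> x; apply: vecP => k; rewrite !aff0E mxE addrK.
have can2 : cancel (aff0 (- v)) (aff0 v).
  by move=> x; apply: vecP => k; rewrite !aff0E mxE addrNK.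
have G2 : G (aff0 (- v)) by apply: gen_inv G1 can1 can2.
split=> //.
have E : phi (aff0 (- v)) \o aff0 w = id.
  by rewrite -E1 -Hhom // -aff0D addNr aff00 phi_id.
have -> : phi (aff0 (- v)) = phi (aff0 (- v)) \o (aff0 w \o aff0 (- w)).
  by rewrite -aff0D subrr aff00.
by change ((phi (aff0 (- v)) \o aff0 w) \o aff0 (- w) = aff0 (- w)); rewrite E.
Qed.

Lemma Qnat v w m : Q v w -> Q (m%:R *: v) (m%:R *: w).
Proof.
move=> H; elim: m => [|m IH]; first by rewrite !scale0r; exact: Q0.
by rewrite mulrS !scalerDl !scale1r; apply: Qadd.
Qed.

Lemma Qint v w (z : int) : Q v w -> Q (z%:~R *: v) (z%:~R *: w).
Proof.
move=> H; case: z => m; first exact: Qnat.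
rewrite NegzE mulrNz !scaleNr; apply: Qopp; exact: Qnat.
Qed.

Lemma Qsum (z : 'I_n -> int) :
  Q (\sum_k (z k)%:~R *: @evec R n k) (\sum_k (z k)%:~R *: wv k).
Proof.
apply: (big_ind2 Q Q0 Qadd) => k _; apply: Qint; split; first exact: u_in.
exact: phi_u.
Qed.

Lemma core (Hn : (0 < n)%N) :
  forall k i : 'I_n, (i.+1 < n)%N -> (k < i)%N -> c k i = c' k i.
Proof.
pose gA i := aff (fun j => j == i) (\col_k (sgn (k == i) (@cvec R n c i k 0))).
have GgA : forall i : 'I_n, (i.+1 < n)%N -> G (gA i).
  by move=> i hi; rewrite /gA -gen_aff //; exact: g_in.
have wint : forall k j, exists y : int, wv k j 0 = y%:~R.
  move=> k j; have Gu := u_in R c k.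
  have [b [Eb Hb]] := istr_aff0 (Hin Gu) (phi_istr Gu (@istr_trans R n c _)).
  move: Eb; rewrite phi_u => /aff_inj [_ ->]; exact: Hb.
have SP : forall j, exists z : 'I_n -> int, @evec R n j = \sum_k (z k)%:~R *: wv k.
  move=> j; have [f [Gf Ef]] := Hsur (u_in R c' j).
  have Hf : istr G f.
    apply: (phi_istr_rev Gf); rewrite Ef; exact: istr_trans.
  have [b [Eb Hb]] := istr_aff0 Gf Hf.
  have [z Hz] := choice Hb.
  have Eb' : b = \sum_k (z k)%:~R *: @evec R n k.
    by apply: vecP => k; rewrite sum_evecE Hz.
  have [_ Eq] := Qsum z.
  exists z; rewrite -Eb' -Eb Ef in Eq; by have [_ ->] := aff_inj Eq.
have HSex : forall i : 'I_n, exists sb : ('I_n -> bool) * V,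
     (i.+1 < n)%N -> phi (gA i) = aff sb.1 sb.2 /\ inv c' sb.1 sb.2.
  move=> i; case: (ltnP i.+1 n) => hi; last by exists ((fun _ => false), 0).
  by have [s [b [E I]]] := Kgroup_aff (Hin (GgA i hi)); exists (s, b).
have [S HS] := choice HSex.
pose s' i := (S i).1.
have F2 : forall i : 'I_n, (i.+1 < n)%N -> exists j, s' i j.
  move=> i hi; case: (pselect (exists j, s' i j)) => // Hno; exfalso.
  have s0 : s' i = (fun _ => false).
    by apply: funext => j; apply/negP => H; apply: Hno; exists j.
  have [E _] := HS i hi.
  have : istr G' (phi (gA i)).
    rewrite E; change (S i).1 with (s' i); rewrite s0; exact: istr_trans.
  move/(phi_istr_rev (GgA i hi)); apply: (@notistr R n c _ _ i); by rewrite eqxx.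
have evE : forall k j, @evec R n k j 0 = if j == k then 1 else 0.
  by move=> k j; rewrite /evec mxE andbT; case: (j == k).
have F3 : forall i : 'I_n, (i.+1 < n)%N -> forall j, ~~ s' i j -> wv i j 0 = 0.
  move=> i hi; have [E _] := HS i hi.
  have Gu := u_in R c i; have Gg := GgA i hi.
  have R1 : aff0 (@evec R n i) \o gA i \o aff0 (@evec R n i) = gA i.
    by apply/rel1 => j ji; rewrite evE (negbTE ji).
  have := congr1 phi R1.
  rewrite (Hhom (gen_comp Gu Gg) Gu) (Hhom Gu Gg) phi_u E; by move/rel1.
have F4 : forall i : 'I_n, (i.+1 < n)%N -> forall k, k != i -> forall j, s' i j -> wv k j 0 = 0.
  move=> i hi k ki; have [E _] := HS i hi.
  have Gu := u_in R c k; have Gg := GgA i hi.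
  have R2 : gA i \o aff0 (@evec R n k) = aff0 (@evec R n k) \o gA i.
    by apply/rel2 => j /eqP ->; rewrite evE eq_sym (negbTE ki).
  have := congr1 phi R2.
  rewrite (Hhom Gg Gu) (Hhom Gu Gg) phi_u E; by move/rel2.
have F5 : forall i : 'I_n, (i.+1 < n)%N -> forall j, s' i j -> (j.+1 < n)%N.
  by move=> i hi j; have [_ [I _]] := HS i hi; exact: I.
have co : forall (v1 v2 : V) j, v1 = v2 -> v1 j 0 = v2 j 0 by move=> ? ? ? ->.
have K : forall i : 'I_n, (i.+1 < n)%N -> forall (z : 'I_n -> int) j, s' i j ->
    (\sum_k (z k)%:~R *: wv k) j 0 = (z i)%:~R * wv i j 0.
  by move=> i hi z j hj; apply: sum_one => k ki; exact: F4 hi k ki j hj.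
have D1 : forall i : 'I_n, (i.+1 < n)%N -> forall j1 j2, s' i j1 -> s' i j2 -> j1 = j2.
  move=> i hi j1 j2 h1 h2; case: (eqVneq j1 j2) => // ne; exfalso.
  have [z1 E1] := SP j1; have [z2 E2] := SP j2.
  have a1 := co _ _ j2 E1; have a2 := co _ _ j1 E1; have a3 := co _ _ j2 E2.
  rewrite (K i hi) // evE in a1; rewrite (K i hi) // evE in a2; rewrite (K i hi) // evE in a3.
  rewrite eqxx in a2 a3; rewrite eq_sym (negbTE ne) in a1.
  move: a1 => /esym /eqP; rewrite mulf_eq0 => /orP [/eqP h|/eqP h].
    by move: a2 => /eqP; rewrite h mul0r oner_eq0.
  by move: a3 => /eqP; rewrite h mulr0 eqxx oner_eq0.
have wpm : forall i : 'I_n, (i.+1 < n)%N -> forall j, s' i j -> wv i j 0 = 1 \/ wv i j 0 = -1.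
  move=> i hi j hj; have [z E] := SP j; have := co _ _ j E.
  rewrite (K i hi) // evE eqxx; have [y Ey] := wint i j; rewrite Ey => /esym /int_pm1 //.
have hl : (n.-1 < n)%N by case: (n) Hn.
pose l := Ordinal hl.
have notl : forall k : 'I_n, k != l -> (k.+1 < n)%N.
  move=> k /eqP kl; case: (ltnP k.+1 n) => // H1; exfalso; apply: kl.
  apply: val_inj => /=; move: (ltn_ord k) H1; rewrite -subn1; lia.
have lnot : ~~ (l.+1 < n)%N by rewrite /= -subn1; apply/negP; lia.
have Kl : forall (z : 'I_n -> int) j, (forall k : 'I_n, (k.+1 < n)%N -> ~~ s' k j) ->
    (\sum_k (z k)%:~R *: wv k) j 0 = (z l)%:~R * wv l j 0.
  move=> z j H; apply: sum_one => k kl; exact: F3 k (notl k kl) j (H k (notl k kl)).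
have sl : forall k : 'I_n, (k.+1 < n)%N -> ~~ s' k l.
  by move=> k hk; apply/negP => /(F5 k hk); apply/negP.
have wll : wv l l 0 = 1 \/ wv l l 0 = -1.
  have [z E] := SP l; have := co _ _ l E.
  rewrite (Kl z l sl) evE eqxx; have [y Ey] := wint l l; rewrite Ey => /esym /int_pm1 //.
have wl0 : forall j, j != l -> wv l j 0 = 0.
  move=> j jl; case: (pselect (exists i : 'I_n, (i.+1 < n)%N /\ s' i j)) => [[i [hi hj]]|Hno].
    apply: (F4 i hi l _ j hj); apply/eqP => li; by move: hi; rewrite -li (negbTE lnot).
  have H : forall k : 'I_n, (k.+1 < n)%N -> ~~ s' k j.
    by move=> k hk; apply/negP => hkj; apply: Hno; exists k.
  exfalso; have [z E] := SP j.
  have a1 := co _ _ j E; have a2 := co _ _ l E.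
  rewrite (Kl z j H) evE eqxx in a1; rewrite (Kl z l sl) evE eq_sym (negbTE jl) in a2.
  move: a2 => /esym /eqP; rewrite mulf_eq0 => /orP [/eqP h|/eqP h].
    by move: a1 => /eqP; rewrite h mul0r oner_eq0.
  by move: wll; rewrite h => -[] /eqP; rewrite eq_sym ?oppr_eq0 oner_eq0.
pose sig (k : 'I_n) := if (k.+1 < n)%N then odflt l [pick j | s' k j] else l.
have sigP : forall k : 'I_n, (k.+1 < n)%N -> s' k (sig k) /\ forall j, s' k j -> j = sig k.
  move=> k hk; rewrite /sig hk; case: pickP => [j hj|H0] /=.
    by split => // j' hj'; exact: D1 k hk j' j hj' hj.
  by have [j hj] := F2 k hk; rewrite H0 in hj.
have sigl : sig l = l by rewrite /sig (negbTE lnot).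
have isl : forall k : 'I_n, (n <= k.+1)%N -> k = l.
  move=> k hk; apply: val_inj => /=; move: (ltn_ord k) hk; rewrite -subn1; lia.
have P1 : forall k j, j != sig k -> wv k j 0 = 0.
  move=> k j; case: (ltnP k.+1 n) => hk.
    have [h1 h2] := sigP k hk => jn; apply: (F3 k hk j); apply/negP => hj.
    by rewrite (h2 j hj) eqxx in jn.
  by rewrite (isl k hk) sigl; exact: wl0.
have P2 : forall k, wv k (sig k) 0 = 1 \/ wv k (sig k) 0 = -1.
  move=> k; case: (ltnP k.+1 n) => hk; first by have [h1 _] := sigP k hk; exact: wpm k hk _ h1.
  by rewrite (isl k hk) sigl.
have sinj : injective sig.
  move=> k1 k2 E; case: (eqVneq k1 k2) => // ne; exfalso.
  case: (ltnP k2.+1 n) => h2.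
    have [s2 _] := sigP k2 h2; have := F4 k2 h2 k1 ne (sig k2) s2; rewrite -E => w0.
    by move: (P2 k1); rewrite w0 => -[] /eqP; rewrite eq_sym ?oppr_eq0 oner_eq0.
  have e2 := isl k2 h2; rewrite e2 sigl in E; rewrite e2 in ne.
  have h1 := notl k1 ne; have [s1 _] := sigP k1 h1.
  by move: (F5 k1 h1 _ s1); rewrite E (negbTE lnot).
have key : forall k i : 'I_n, (i.+1 < n)%N -> acoef c k i = acoef c' (sig k) (sig i).
  move=> k i hi.
  case: (eqVneq k i) => [->|ki]; first by rewrite !acoef_diag.
  pose z j : int := (acoef c j i : nat).
  have Egg : gA i \o gA i = aff0 (\sum_j (z j)%:~R *: @evec R n j).
    rewrite /gA aff_sq; congr aff0; apply: vecP => j; rewrite sum_evecE !mxE sgnK /z.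
    case: (eqVneq j i) => [->|ji] /=.
      by rewrite acoef_diag /= subrr.
    rewrite /acoef.
    case: (_ == _); case: (_ && _) => /=; rewrite ?intr1; by field.
  have [_ Eq] := Qsum z.
  rewrite -Egg (Hhom (GgA i hi) (GgA i hi)) (proj1 (HS i hi)) aff_sq in Eq.
  have /aff_inj [_ Ev] := Eq.
  have := co _ _ (sig k) Ev.
  rewrite mxE (@sum_one _ _ _ _ k); last first.
    by move=> k' kk'; apply: P1; apply/eqP => /sinj E'; rewrite E' eqxx in kk'.
  have [si1 si2] := sigP i hi.
  have nsk : s' i (sig k) = false.
    by apply/negP => /si2 /sinj E'; rewrite E' eqxx in ki.
  change (S i).1 with (s' i); rewrite nsk /=.
  have s'eq : s' i = (fun j => j == sig i).
    apply: funext => j; apply/idP/eqP => [/si2 //|->]; exact: si1.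
  have [_ [_ Hb]] := HS i hi; have := Hb (sig k).
  change (S i).1 with (s' i); rewrite s'eq par1 => -[y ->] E.
  apply: (parity (P2 k) (y := y)); rewrite -E /z; by field.
have sid := rigid (erefl (l : nat)) sinj sigl key.
move=> k i hi ki; have := key k i hi; rewrite !sid /acoef.
have -> : ((k : nat) == i.+1) = false by apply/negP => /eqP; lia.
by rewrite ki.
Qed.
End Phi.





Section Final.
Variables (R : realType) (n : nat).

Lemma half_neq0 : (2^-1 : R) != 0.
Proof. by rewrite invr_eq0 pnatr_eq0. Qed.

Lemma cvec_eq (c c' : 'I_n -> 'I_n -> bool) (i : 'I_n) :
  (forall k : 'I_n, (k < i)%N -> c k i = c' k i) -> @cvec R n c i = @cvec R n c' i.
Proof.
move=> H; apply/matrixP => k j; rewrite !mxE.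
case: (_ == _) => //; case: (ltnP k i) => //= ki; by rewrite H.
Qed.

Lemma karray_eq (c c' : 'I_n -> 'I_n -> bool) :
  (forall k i : 'I_n, (i.+1 < n)%N -> (k < i)%N -> c k i = c' k i) ->
  @Karray R n c = @Karray R n c'.
Proof.
move=> H; apply/matrixP => k i; rewrite [LHS]mxE [RHS]mxE.
case: ifP => hi; first by rewrite (cvec_eq (fun k => H k i hi)).
rewrite (eq_bigr (fun j : 'I_n => @cvec R n c' j k 0)) //.
by move=> j hj; rewrite (cvec_eq (fun k => H k j hj)).
Qed.

Lemma karray_agree (c c' : 'I_n -> 'I_n -> bool) :
  @Karray R n c = @Karray R n c' ->
  (forall k i : 'I_n, (i.+1 < n)%N -> (k < i)%N -> c k i = c' k i).
Proof.
move=> E k i hi ki; have := congr1 (fun A : 'M[R]_n => A k i) E.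
rewrite !mxE hi.
have -> : ((k : nat) == i.+1) = false by apply/negP => /eqP; lia.
rewrite ki /=; case: (c k i); case: (c' k i) => //= /eqP; by rewrite ?(negbTE half_neq0) // eq_sym (negbTE half_neq0).
Qed.

Lemma gen_mono (S S' : ('cV[R]_n -> 'cV[R]_n) -> Prop) :
  (forall f, S f -> S' f) -> forall f, gen_grp S f -> gen_grp S' f.
Proof.
move=> H f; elim => {f}; first exact: gen_id.
- by move=> f Sf; apply: gen_base; apply: H.
- by move=> f g _ Hf _ Hg; apply: gen_comp.
- by move=> f g _ Hf fg gf; apply: gen_inv Hf fg gf.
Qed.

Lemma Kgroup_sub (c c' : 'I_n -> 'I_n -> bool) :
  (forall k i : 'I_n, (i.+1 < n)%N -> (k < i)%N -> c k i = c' k i) ->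
  forall f, @Kgroup R n c f -> @Kgroup R n c' f.
Proof.
move=> H; apply: gen_mono => f [[i [hi ->]]|[j ->]]; last by right; exists j.
by left; exists i; split=> //; rewrite (cvec_eq (fun k => H k i hi)).
Qed.

Lemma kg_acoef (c : 'I_n -> 'I_n -> bool) (k i : 'I_n) : (i.+1 < n)%N ->
  Kgraph (@Karray R n c) k i = acoef c k i.
Proof.
move=> hi; rewrite /Kgraph mxE hi mxE /acoef.
case: ((k : nat) == i.+1); first by rewrite eqxx.
case: ((k < i)%N && c k i); first by rewrite eqxx.
by rewrite /= eq_sym (negbTE half_neq0).
Qed.

Lemma kg_loop (c : 'I_n -> 'I_n -> bool) (l : 'I_n) : (1 < n)%N -> (l : nat) = n.-1 ->
  Kgraph (@Karray R n c) l l.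
Proof.
move=> hn hl; rewrite /Kgraph mxE hl ltnNge prednK ?leqnn /=; last by lia.
have hj0 : (n.-2 < n)%N by lia.
pose j0 := Ordinal hj0.
rewrite (bigD1 j0) /=; last by lia.
rewrite big1 => [|j /andP [hj jj0]]; last first.
  rewrite mxE hl.
  have -> : (n.-1 == j.+1) = false.
    apply/negP => /eqP E; move: jj0 => /negP; apply; apply/eqP; apply: val_inj => /=; lia.
  have -> : (n.-1 < j)%N = false by apply/negP; lia.
  by [].
rewrite mxE hl /=.
have -> : (n.-1 == n.-2.+1) by apply/eqP; lia.
rewrite addr0.
case: ifP => //; case/intrP => m Em; exfalso.
have : ((1 : int)%:~R : R) = (2 * m)%:~R.
  by rewrite intrM -Em /=; field.
move/intr_inj; lia.
Qed.

End Final.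

Theorem proposition4p4 (R : realType) (n : nat) (c c' : 'I_n -> 'I_n -> bool) :
  (2 <= n)%N ->
  (grp_iso (@Kgroup R n c) (@Kgroup R n c') <-> @Karray R n c = @Karray R n c') /\
  (@Karray R n c = @Karray R n c' <->
     digraph_iso (Kgraph (@Karray R n c)) (Kgraph (@Karray R n c'))).
Proof.
move=> hn.
have hn0 : (0 < n)%N by lia.
split; split.
- case=> phi [H1 H2 H3 H4]; apply: karray_eq; exact: (core H1 H2 H3 H4 hn0).
- move=> E; have ag := karray_agree E.
  have ag' : forall k i : 'I_n, (i.+1 < n)%N -> (k < i)%N -> c' k i = c k i.
    by move=> k i hi ki; rewrite ag.
  exists id; split => //.
  + exact: Kgroup_sub ag.
  + by move=> h Gh; exists h; split=> //; exact: Kgroup_sub ag' h Gh.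
- by move=> <-; exists 1%g => i j; rewrite !perm1.
- case=> s Hs; apply: karray_eq.
  have hl : (n.-1 < n)%N by lia.
  pose l := Ordinal hl.
  have isl : forall k : 'I_n, (n <= k.+1)%N -> k = l.
    by move=> k hk; apply: val_inj => /=; move: (ltn_ord k) hk; lia.
  have sinj : injective s := @perm_inj _ s.
  have sl : s l = l.
    have := kg_loop R c (l := l) hn (erefl _); rewrite Hs.
    case: (ltnP (s l).+1 n) => h; last by rewrite (isl _ h).
    by rewrite (kg_acoef R) // acoef_diag.
  have sn : forall i : 'I_n, (i.+1 < n)%N -> ((s i).+1 < n)%N.
    move=> i hi; case: (ltnP (s i).+1 n) => // h; exfalso.
    have := isl _ h; rewrite -sl => /sinj E; move: hi; rewrite E /=; lia.
  have key : forall k i : 'I_n, (i.+1 < n)%N -> acoef c k i = acoef c' (s k) (s i).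
    by move=> k i hi; rewrite -(kg_acoef R) // Hs (kg_acoef R) // sn.
  have sid := rigid (erefl (l : nat)) sinj sl key.
  move=> k i hi ki; have := key k i hi; rewrite !sid /acoef.
  have -> : ((k : nat) == i.+1) = false by apply/negP => /eqP; lia.
  by rewrite ki.
Qed.
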